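(* Let $p\ge2$. Let $(u_n)\subset L^p(\mathbb{R}^2)$ with $u_n\to u$ a.e. on $\mathbb{R}^2$, where $u\in L^p(\mathbb{R}^2)\setminus\{0\}$. Let $(v_n)$ be bounded in $L^p(\mathbb{R}^2)$ with $\sup_n B_1(|u_n|^p,|v_n|^p)<\infty$. Then there exist $n_0$ and $C>0$ such that $\|v_n\|_*\le C$ for all $n\ge n_0$. Moreover, if $B_1(|u_n|^p,|v_n|^p)\to0$ and $\|v_n\|_{L^p}\to0$, then $\|v_n\|_*\to0$.
   Context: $B_1(f,g):=\int_{\mathbb{R}^2}\int_{\mathbb{R}^2}\log(1+|x-y|)f(x)g(y)\,dx\,dy$ (for nonnegative $f,g$ this is in $[0,\infty]$). $\|v\|_*:=\big(\int_{\mathbb{R}^2}\log(1+|x|)|v|^p\,dx\big)^{1/p}$. *)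

(* Defs.v *)
From HB Require Import structures.
From mathcomp Require Import all_boot all_order all_algebra.
From mathcomp Require Import all_classical all_reals all_analysis.
Set Implicit Arguments. Unset Strict Implicit. Unset Printing Implicit Defensive.
Import Order.TTheory GRing.Theory Num.Theory.
Import numFieldNormedType.Exports.
Local Open Scope classical_set_scope.
Local Open Scope ring_scope.

(* The plane R^2 is modelled as R * R with the product sigma-algebra. *)
Definition leb2 (R : realType) :=
  (@lebesgue_measure R \x @lebesgue_measure R)%E.
Arguments leb2 : clear implicits.

Definition enorm2 (R : realType) (x : R * R) : R :=
  Num.sqrt (x.1 ^+ 2 + x.2 ^+ 2).

Definition B1 (R : realType) (f g : R * R -> R) : \bar R :=
  (\int[leb2 R]_x \int[leb2 R]_y
     (ln (1 + enorm2 (x.1 - y.1, x.2 - y.2)) * f x * g y)%:E)%E.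

Definition powabs (R : realType) (p : R) (v : R * R -> R) : R * R -> R :=
  fun x => `|v x| `^ p.

Definition starnorm (R : realType) (p : R) (v : R * R -> R) : \bar R :=
  ((\int[leb2 R]_x (ln (1 + enorm2 x) * `|v x| `^ p)%:E) `^ p^-1)%E.

Definition inLp (R : realType) (p : R) (v : R * R -> R) : Prop :=
  measurable_fun setT v /\ (\int[leb2 R]_x (`|v x| `^ p)%:E < +oo)%E.

Definition Lpnorm (R : realType) (p : R) (v : R * R -> R) : \bar R :=
  Lnorm (leb2 R) p%:E (EFin \o v).

(* Main.v *)
Require Import Defs.
From HB Require Import structures.
From mathcomp Require Import all_boot all_order all_algebra.
From mathcomp Require Import all_classical all_reals all_analysis.
From mathcomp Require Import ring lra.
From mathcomp Require Import measurable_realfun.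
Import Order.TTheory GRing.Theory Num.Theory.
Import numFieldNormedType.Exports.
Local Open Scope classical_set_scope.
Local Open Scope ring_scope.
Set Implicit Arguments. Unset Strict Implicit.

Section Aux.
Variable R : realType.

HB.instance Definition _ := Measure.on (leb2 R).
Let m1 : {sigma_finite_measure set _ -> \bar R} := @lebesgue_measure R.
Lemma leb2_sf : sigma_finite setT (leb2 R).
Proof.
have /sigma_finiteP[F [TF ndF Foo]] := sigma_finiteT m1.
exists (fun n => F n `*` F n).
 rewrite -setXTT TF predeqE => -[x y]; split.
    move=> [/= [n _ Fnx] [k _ Gky]]; exists (maxn n k) => //; split.
    - by move: x Fnx; exact/subsetPset/ndF/leq_maxl.
    - by move: y Gky; exact/subsetPset/ndF/leq_maxr.
  by move=> [n _ []/= ? ?]; split; exists n.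
move=> k; have [? ?] := Foo k.
split; first exact: measurableX.
by rewrite /leb2 product_measure1E// lte_mul_pinfty// ge0_fin_numE.
Qed.
HB.instance Definition _ := Measure_isSigmaFinite.Build _ _ _ (leb2 R) leb2_sf.

Lemma cs (a b c d A B : R) : 0 <= A -> 0 <= B -> A^+2 = a^+2+b^+2 ->
  B^+2 = c^+2+d^+2 -> a*c+b*d <= A*B.
Proof. move=> A0 B0 hA hB.
have h : (a*c+b*d)^+2 <= (A*B)^+2.
  rewrite exprMn hA hB. have := sqr_ge0 (a*d-b*c). nra.
have AB0 : 0 <= A * B by exact: mulr_ge0.
nra. Qed.

Lemma enorm2_ge0 (x : R * R) : 0 <= enorm2 x.
Proof. exact: sqrtr_ge0. Qed.

Lemma enorm2_sq (x : R * R) : enorm2 x ^+ 2 = x.1 ^+ 2 + x.2 ^+ 2.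
Proof. by rewrite /enorm2 sqr_sqrtr // addr_ge0 // sqr_ge0. Qed.

Lemma enorm2_tri (a b c d : R) : enorm2 (a + c, b + d) <= enorm2 (a, b) + enorm2 (c, d).
Proof.
have X0 := enorm2_ge0 (a + c, b + d).
have A0 := enorm2_ge0 (a, b). have B0 := enorm2_ge0 (c, d).
have hX := enorm2_sq (a + c, b + d). have hA := enorm2_sq (a, b).
have hB := enorm2_sq (c, d). rewrite /= in hX hA hB.
have := @cs a b c d _ _ A0 B0 hA hB. nra.
Qed.

Lemma enorm2_box (x : R * R) k : `|x.1| <= k -> `|x.2| <= k -> enorm2 x <= 2 * k.
Proof.
move=> /ler_normlP [h1 h2] /ler_normlP [h3 h4].
have X0 := enorm2_ge0 x. have hX := enorm2_sq x. nra.
Qed.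

Definition ell (z : R * R) := ln (1 + enorm2 z).

Lemma ell_ge0 z : 0 <= ell z.
Proof. by apply: ln_ge0; rewrite lerDl enorm2_ge0. Qed.

Lemma ell_tri (x y : R * R) : ell y <= ln (1 + enorm2 (x.1 - y.1, x.2 - y.2)) + ell x.
Proof.
move: x y => [x1 x2] [y1 y2] /=.
have e : (y1, y2) = (- (x1 - y1) + x1, - (x2 - y2) + x2).
  by congr pair; ring.
have en : enorm2 (- (x1 - y1), - (x2 - y2)) = enorm2 (x1 - y1, x2 - y2).
  by rewrite /enorm2 /= !sqrrN.
have t := enorm2_tri (- (x1 - y1)) (- (x2 - y2)) x1 x2.
rewrite -e en in t.
have p1 := enorm2_ge0 (x1 - y1, x2 - y2). have p2 := enorm2_ge0 (x1, x2).
have q1 : 1 + enorm2 (x1 - y1, x2 - y2) \is Num.pos by rewrite posrE; lra.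
have q2 : 1 + enorm2 (x1, x2) \is Num.pos by rewrite posrE; lra.
have q3 : 1 + enorm2 (y1, y2) \is Num.pos.
  by rewrite posrE; have := enorm2_ge0 (y1, y2); lra.
have q4 : (1 + enorm2 (x1 - y1, x2 - y2)) * (1 + enorm2 (x1, x2)) \is Num.pos.
  by rewrite posrE; apply: mulr_gt0; rewrite -posrE.
rewrite /ell -(lnM q1 q2) (ler_ln q3 q4).
nra.
Qed.

Lemma measurable_ell2 d (T : measurableType d) (a b : T -> R) :
  measurable_fun setT a -> measurable_fun setT b ->
  measurable_fun setT (fun t => ln (1 + enorm2 (a t, b t))).
Proof.
move=> ma mb.
apply: measurableT_comp; first exact: measurable_realfun.measurable_ln.
apply: measurable_realfun.measurable_funD; first exact: measurable_cst.
rewrite /enorm2 /=.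
apply: measurableT_comp; first exact: (measurable_realfun.continuous_measurable_fun (@sqrt_continuous R)).
by apply: measurable_realfun.measurable_funD; apply: measurable_realfun.measurable_funX.
Qed.

End Aux.

Section Core.
Variable R : realType.
Local Notation mu := (leb2 R).
Local Notation T := (measurableTypeR R * measurableTypeR R)%type.

Lemma core (f g : T -> R) (E : set T) (δ L : R) :
  measurable_fun setT f -> measurable_fun setT g ->
  (forall x, 0 <= f x) -> (forall x, 0 <= g x) ->
  measurable E -> 0 < δ -> 0 <= L ->
  (forall x, E x -> δ <= f x /\ ell x <= L) ->
  ((δ%:E * \int[mu]_y (ell y * g y)%:E) * mu E <=
   B1 f g + ((δ * L)%:E * \int[mu]_y (g y)%:E) * mu E)%E.
Proof.
move=> mf mg f0 g0 mE d0 L0 hE.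
set S := (\int[mu]_y (ell y * g y)%:E)%E.
set N := (\int[mu]_y (g y)%:E)%E.
pose h (z : T * T) :=
  (ln (1 + enorm2 (z.1.1 - z.2.1, z.1.2 - z.2.2)) * f z.1 * g z.2)%:E.
have mh : measurable_fun setT h.
  apply/measurable_EFinP; apply: measurable_realfun.measurable_funM.
    apply: measurable_realfun.measurable_funM.
      apply: measurable_ell2; apply: measurable_realfun.measurable_funB.
      - exact: measurableT_comp measurable_fst measurable_fst.
      - exact: measurableT_comp measurable_fst measurable_snd.
      - exact: measurableT_comp measurable_snd measurable_fst.
      - exact: measurableT_comp measurable_snd measurable_snd.
    exact: measurableT_comp mf measurable_fst.
  exact: measurableT_comp mg measurable_snd.
have ell'0 : forall a b, 0 <= ln (1 + enorm2 (a, b)) := fun a b => ell_ge0 (a, b).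
have h0 : forall z, (0 <= h z)%E.
  move=> z; rewrite lee_fin; apply: mulr_ge0; last exact: g0.
  by apply: mulr_ge0; [exact: ell'0|exact: f0].
pose I x := (\int[mu]_y h (x, y))%E.
have mI : measurable_fun setT I.
  exact: (@measurable_fun_fubini_tonelli_F _ _ _ _ R mu h mh h0).
have I0 : forall x, (0 <= I x)%E by move=> x; apply: integral_ge0 => y _.
have mell : measurable_fun setT (@ell R).
  by apply: (measurable_ell2 measurable_fst measurable_snd).
have S0 : (0 <= S)%E.
  by apply: integral_ge0 => y _; rewrite lee_fin mulr_ge0 ?ell_ge0.
have N0 : (0 <= N)%E by apply: integral_ge0 => y _; rewrite lee_fin.
have mg' : measurable_fun setT (fun y => (g y)%:E) by exact/measurable_EFinP.
have mellg : measurable_fun setT (fun y => (ell y * g y)%:E).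
  by apply/measurable_EFinP; exact: measurable_realfun.measurable_funM.
have pt : forall x, E x -> (δ%:E * S <= I x + (δ * L)%:E * N)%E.
  move=> x Ex; have [dfx ellx] := hE x Ex.
  have ellg0 : forall y, (0 <= (ell y * g y)%:E)%E.
    by move=> y; rewrite lee_fin mulr_ge0 ?ell_ge0.
  have gg0 : forall y, (0 <= (g y)%:E)%E by move=> y; rewrite lee_fin.
  rewrite /S /N -(ge0_integralZl_EFin mu measurableT (fun y _ => ellg0 y) mellg (ltW d0)).
  have dL0 : 0 <= δ * L by rewrite mulr_ge0 // ltW.
  rewrite -(ge0_integralZl_EFin mu measurableT (fun y _ => gg0 y) mg' dL0).
  rewrite /I -ge0_integralD //; last first.
  - exact: measurable_funeM mg'.
  - by move=> y _; apply: mule_ge0; rewrite lee_fin.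
  - by apply: measurable_fun_pair2; exact: mh.
  apply: ge0_le_integral => //.
  - by move=> y _; apply: mule_ge0; [rewrite lee_fin ltW|rewrite lee_fin mulr_ge0 ?ell_ge0].
  - exact: measurable_funeM mellg.
  - apply: emeasurable_funD.
    + by apply: measurable_fun_pair2; exact: mh.
    + exact: measurable_funeM mg'.
  move=> y _; rewrite /h /= -EFinD lee_fin.
  have ty := ell_tri x y.
  set l' := ln _ in ty *.
  have l'0 : 0 <= l' by exact: ell'0.
  have gy := g0 y.
  have t1 : ell y * g y <= (l' + L) * g y.
    by apply: ler_wpM2r => //; lra.
  have t2 : δ * l' <= f x * l' by apply: ler_wpM2r.
  have t3 : δ * l' * g y <= f x * l' * g y by apply: ler_wpM2r.
  nra.
have c10 : (0 <= δ%:E * S)%E by apply: mule_ge0 => //; rewrite lee_fin ltW.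
have c20 : (0 <= (δ * L)%:E * N)%E by apply: mule_ge0 => //; rewrite lee_fin mulr_ge0 // ltW.
rewrite -(integral_cst mu mE (δ%:E * S)) -(integral_cst mu mE ((δ * L)%:E * N)).
have mIE : measurable_fun E I by exact: measurable_funS mI.
apply: (@le_trans _ _ (\int[mu]_(x in E) (I x + cst ((δ * L)%:E * N) x))%E).
  apply: ge0_le_integral => //.
  apply: emeasurable_funD; [exact: mIE|]. exact: measurable_cst.
have mc : measurable_fun E (cst ((δ * L)%:E * N)%E) by exact: measurable_cst.
rewrite ge0_integralD //.
apply: leeD2r.
apply: le_trans (ge0_subset_integral mu mE measurableT mI (fun x _ => I0 x) (subsetT E)) _.
exact: le_refl.
Qed.
End Core.

Section Helpers.
Variable R : realType.
Local Notation mu := (leb2 R).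
Local Notation T := (measurableTypeR R * measurableTypeR R)%type.

Lemma ev_nat (P : nat -> Prop) :
  (\forall n \near \oo, P n) <-> exists N, forall n, (N <= n)%N -> P n.
Proof.
split => [[N _ hN]|[N hN]]; first by exists N => n /hN.
by exists N.
Qed.

Lemma cvge0P (a : nat -> \bar R) : (forall n, 0 <= a n)%E ->
  (a @ \oo --> 0%E) <-> forall e, 0 < e -> exists N, forall n, (N <= n)%N -> (a n <= e%:E)%E.
Proof.
move=> a0; split.
  move=> /fine_cvgP [fa /cvgrPdist_le ca] e e0.
  have [N1 hN1] := (ev_nat _).1 fa.
  have [N2 hN2] := (ev_nat _).1 (ca e e0).
  exists (maxn N1 N2) => n hn.
  have f1 := hN1 n (leq_trans (leq_maxl _ _) hn).
  have f2 := hN2 n (leq_trans (leq_maxr _ _) hn).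
  rewrite -(fineK f1) lee_fin.
  by move: f2; rewrite /= sub0r normrN => /(le_trans (ler_norm _)).
move=> h; apply/fine_cvgP; split.
  have [N hN] := h 1 ltr01.
  apply/(ev_nat _).2; exists N => n /hN an.
  by rewrite ge0_fin_numE // (le_lt_trans an) // ltry.
apply/cvgrPdist_le => e e0.
have [N hN] := h e e0.
apply/(ev_nat _).2; exists N => n /hN an.
have fa : a n \is a fin_num by rewrite ge0_fin_numE // (le_lt_trans an) // ltry.
rewrite /= sub0r normrN ger0_norm; last by rewrite fine_ge0.
by rewrite -lee_fin fineK.
Qed.

Lemma meas_ge (F : T -> R) (a : R) : measurable_fun setT F ->
  measurable [set x | a <= F x].
Proof.
move=> mF.
have -> : [set x | a <= F x] = setT `&` F @^-1` `[a, +oo[%classic.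
  apply/seteqP; split => x /=.
    by move=> h; split => //; rewrite in_itv /= andbT.
  by case=> _; rewrite in_itv /= andbT.
exact: mF.
Qed.

Lemma Lpnorm_N (p : R) (v : R * R -> R) :
  Lpnorm p v = ((\int[mu]_x (`|v x| `^ p)%:E) `^ p^-1)%E.
Proof.
rewrite /Lpnorm unlock /=.
by congr poweR.
Qed.

Lemma N_Lp (p : R) (v : R * R -> R) : 0 < p ->
  (\int[mu]_x (`|v x| `^ p)%:E)%E = ((Lpnorm p v) `^ p)%E.
Proof.
move=> p0; rewrite Lpnorm_N -poweRrM mulVf ?gt_eqF // poweRe1 //.
by apply: integral_ge0 => x _; rewrite lee_fin powR_ge0.
Qed.

End Helpers.

Section ESet.
Variable R : realType.
Local Notation mu := (leb2 R).
Local Notation T := (measurableTypeR R * measurableTypeR R)%type.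

Definition Eset (u_ : nat -> T -> R) (m : nat) : set T :=
  [set x | `|x.1| <= m.+1%:R] `&` [set x | `|x.2| <= m.+1%:R] `&`
  \bigcap_i [set x | (m.+1%:R)^-1 <= `|u_ (i + m)%N x|].

Lemma Eset_meas u_ m : (forall n, measurable_fun setT (u_ n)) -> measurable (Eset u_ m).
Proof.
move=> mu_.
have mle : forall F : T -> R, measurable_fun setT F -> forall a, measurable [set x | F x <= a].
  move=> F mF a.
  have -> : [set x | F x <= a] = [set x | - a <= - F x].
    by apply/seteqP; split => x /=; rewrite lerN2.
  by apply: meas_ge; exact: measurable_funN.
apply: measurableI; first apply: measurableI.
- by apply: mle; apply: measurableT_comp => //; exact: measurable_fst.
- by apply: mle; apply: measurableT_comp => //; exact: measurable_snd.
apply: bigcapT_measurable => i; apply: meas_ge.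
exact: measurableT_comp.
Qed.

Lemma Eset_fin u_ m : (forall n, measurable_fun setT (u_ n)) -> (mu (Eset u_ m) < +oo)%E.
Proof.
move=> mu_.
set k : R := m.+1%:R.
have k0 : 0 < k by rewrite ltr0n.
pose I : set (measurableTypeR R) := [set` `[- k, k]].
have mI : measurable I by exact: measurable_itv.
apply: (@le_lt_trans _ _ (mu (I `*` I))).
  apply: le_measure; rewrite ?inE.
  - exact: Eset_meas.
  - exact: measurableX.
  move=> x [[/= h1 h2] _]; split => /=.
    by rewrite /I /= in_itv /= -ler_norml.
  by rewrite /I /= in_itv /= -ler_norml.
have Lk : (@lebesgue_measure R I < +oo)%E.
  rewrite /I lebesgue_measure_itv /=.
  have -> : ((- k)%:E < k%:E)%E by rewrite lte_fin; lra.
  by rewrite -EFinB ltry.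
have L0 : (0 <= @lebesgue_measure R I)%E by exact: measure_ge0.
rewrite /leb2 product_measure1E //.
apply: lte_mul_pinfty.
- exact: L0.
- by rewrite ge0_fin_numE //; exact: Lk.
- exact: Lk.
Qed.

Lemma Eset_pos u_ (u : T -> R) : (forall n, measurable_fun setT (u_ n)) ->
  {ae mu, forall x, (fun n => u_ n x) @ \oo --> u x} ->
  ~ {ae mu, forall x, u x = 0} ->
  exists m, (0 < mu (Eset u_ m))%E.
Proof.
move=> mu_ hc hnz; apply: contrapT => /forallNP H.
apply: hnz.
have H0 : forall m, mu (Eset u_ m) = 0.
  move=> m; have := measure_ge0 mu (Eset u_ m).
  by rewrite le_eqVlt => /orP[/eqP <- //|/H].
have hE : {ae mu, forall x, forall m, ~ Eset u_ m x}.
  apply: ae_foralln => m.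
  exists (Eset u_ m); split; [exact: Eset_meas | exact: H0 | ].
  by move=> x /= /contrapT.
apply: filterS2 hc hE => x hx hEx.
apply: contrapT => ux0.
set a := `|u x|.
have a0 : 0 < a by rewrite normr_gt0; apply/eqP.
have [N1 hN1] := (ev_nat _).1 ((cvgrPdist_le _ _).1 hx (a / 2) (divr_gt0 a0 (ltr0n _ 2))).
pose m := maxn N1 (maxn (Num.trunc `|x.1|) (maxn (Num.trunc `|x.2|) (Num.trunc (2 / a)))).
apply: (hEx m).
have km : forall r : R, 0 <= r -> (Num.trunc r <= m)%N -> r <= m.+1%:R.
  move=> r r0 hr; apply/ltW; apply: (lt_le_trans (truncnS_gt r)).
  by rewrite ler_nat ltnS.
split; first split.
- apply: km => //; rewrite /m.
  by rewrite (leq_trans _ (leq_maxr _ _)) // leq_maxl.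
- apply: km => //; rewrite /m.
  by rewrite (leq_trans _ (leq_maxr _ _)) // (leq_trans _ (leq_maxr _ _)) // leq_maxl.
move=> i _ /=.
have hn := hN1 (i + m)%N (leq_trans (leq_maxl _ _) (leq_addl _ _)).
rewrite /= in hn.
have h2 : a / 2 <= `|u_ (i + m)%N x|.
  have := lerB_dist (u x) (u_ (i + m)%N x). rewrite -/a. lra.
have hk : 2 / a <= m.+1%:R.
  apply: km; first by rewrite divr_ge0 // ltW.
  by rewrite /m (leq_trans _ (leq_maxr _ _)) // (leq_trans _ (leq_maxr _ _)) // leq_maxr.
apply: le_trans h2.
rewrite -[a / 2]invrK lef_pV2 ?posrE ?ltr0n ?invr_gt0 ?divr_gt0 //.
by rewrite invf_div.
Qed.

End ESet.

Unset Implicit Arguments. Set Strict Implicit.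

Theorem lemma3p2 (R : realType) (p : R) (u_ v_ : nat -> R * R -> R) (u : R * R -> R) :
  2 <= p ->
  (forall n, inLp p (u_ n)) ->
  inLp p u ->
  {ae leb2 R, forall x, (fun n => u_ n x) @ \oo --> u x} ->
  ~ {ae leb2 R, forall x, u x = 0} ->
  (forall n, inLp p (v_ n)) ->
  (exists M : R, forall n, (Lpnorm p (v_ n) <= M%:E)%E) ->
  (exists M : R, forall n, (B1 (powabs p (u_ n)) (powabs p (v_ n)) <= M%:E)%E) ->
  (exists (n0 : nat) (C : R), 0 < C /\
     forall n, (n0 <= n)%N -> (starnorm p (v_ n) <= C%:E)%E)
  /\
  ((fun n => B1 (powabs p (u_ n)) (powabs p (v_ n))) @ \oo --> 0%E ->
   (fun n => Lpnorm p (v_ n)) @ \oo --> 0%E ->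
   (fun n => starnorm p (v_ n)) @ \oo --> 0%E).
Proof.
move=> p2 hu hu0 hconv hnz hv [K hK] [M1 hM1].
have p0 : 0 < p by apply: lt_le_trans p2; rewrite ltr0n.
pose T := (measurableTypeR R * measurableTypeR R)%type.
pose mu := leb2 R.
have mu_ : forall n, measurable_fun (setT : set T) (u_ n) by move=> n; exact: (hu n).1.
have mv_ : forall n, measurable_fun (setT : set T) (v_ n) by move=> n; exact: (hv n).1.
have [m Epos] := Eset_pos mu_ hconv hnz.
set E := Eset u_ m.
have mE : measurable E := Eset_meas m mu_.
have Efin : (mu E < +oo)%E := Eset_fin m mu_.
set a := fine (mu E).
have Ea : mu E = a%:E by rewrite fineK // ge0_fin_numE // measure_ge0.
have a0 : 0 < a by rewrite -lte_fin -Ea.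
set k : R := m.+1%:R.
have k0 : 0 < k by rewrite ltr0n.
set δ := k^-1 `^ p.
have d0 : 0 < δ by rewrite powR_gt0 // invr_gt0.
set L := ln (1 + 2 * k).
have L0 : 0 <= L by apply: ln_ge0; lra.
have hE : forall n, (m <= n)%N -> forall x, E x -> δ <= powabs p (u_ n) x /\ ell x <= L.
  move=> n hn x [[h1 h2] h3]; split.
    have := h3 (n - m)%N I; rewrite /= subnK // => h.
    by apply: ge0_ler_powR => //; rewrite ?nnegrE ?invr_ge0 ?ltW.
  rewrite /ell /L ler_ln ?posrE; [|have := enorm2_ge0 x; lra|lra].
  have := enorm2_box h1 h2; rewrite -/k; lra.
pose S n := (\int[mu]_y (ell y * powabs p (v_ n) y)%:E)%E.
pose N n := (\int[mu]_y (powabs p (v_ n) y)%:E)%E.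
have mpow : forall w : T -> R, measurable_fun setT w -> measurable_fun setT (powabs p w).
  move=> w mw; apply: (measurableT_comp (measurable_powR p)).
  exact: measurableT_comp.
have N0 : forall n, (0 <= N n)%E.
  by move=> n; apply: integral_ge0 => y _; rewrite lee_fin powR_ge0.
have S0 : forall n, (0 <= S n)%E.
  by move=> n; apply: integral_ge0 => y _; rewrite lee_fin mulr_ge0 ?ell_ge0 ?powR_ge0.
have Nfin : forall n, N n \is a fin_num.
  by move=> n; rewrite ge0_fin_numE //; exact: (hv n).2.
have NL : forall n, N n = (Lpnorm p (v_ n) `^ p)%E by move=> n; exact: N_Lp.
have key : forall n, (m <= n)%N ->
    ((δ * a)%:E * S n <= B1 (powabs p (u_ n)) (powabs p (v_ n)) + (δ * L * a * fine (N n))%:E)%E.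
  move=> n hn.
  have := @core R (powabs p (u_ n)) (powabs p (v_ n)) E δ L (mpow _ (mu_ n)) (mpow _ (mv_ n))
    (fun x => powR_ge0 _ _) (fun x => powR_ge0 _ _) mE d0 L0 (hE n hn).
  move=> h.
  have e1 : ((δ * L * a * fine (N n))%:E = ((δ * L)%:E * N n) * a%:E)%E.
    by rewrite -(fineK (Nfin n)) -!EFinM /=; congr EFin; ring.
  have e2 : ((δ * a)%:E * S n = (δ%:E * S n) * a%:E)%E by rewrite muleAC EFinM.
  rewrite e1 e2 -Ea.
  exact: h.
have Lp0 : forall n, (0 <= Lpnorm p (v_ n))%E.
  by move=> n; rewrite Lpnorm_N poweR_ge0.
have itv0 : forall x : \bar R, (0 <= x)%E -> x \in `[0%E, +oo%E]%R.
  by move=> x x0; rewrite in_itv /= x0 leey.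
split.
  have K0 : 0 <= K by rewrite -lee_fin; exact: le_trans (Lp0 0%N) (hK 0%N).
  have NK : forall n, fine (N n) <= K `^ p.
    move=> n; rewrite -lee_fin fineK // NL -poweR_EFin.
    by apply: gt0_ler_poweR; [exact: ltW | exact: itv0 | apply: itv0; rewrite lee_fin | exact: hK].
  set Q := M1 + δ * L * a * K `^ p.
  set Bd := (δ * a)^-1 * Q.
  have SB : forall n, (m <= n)%N -> (S n <= Bd%:E)%E.
    move=> n hn; rewrite /Bd EFinM lee_pdivlMl ?mulr_gt0 //.
    apply: le_trans (key n hn) _.
    rewrite /Q EFinD; apply: leeD; first exact: hM1.
    by rewrite lee_fin; apply: ler_wpM2l (NK n); rewrite !mulr_ge0 // ltW.
  have Bd0 : 0 <= Bd by rewrite -lee_fin; exact: le_trans (S0 m) (SB m (leqnn m)).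
  exists m, (Bd `^ p^-1 + 1); split; first by have := powR_ge0 Bd p^-1; lra.
  move=> n hn.
  have h1 : (S n `^ p^-1 <= Bd%:E `^ p^-1)%E.
    by apply: gt0_ler_poweR; [rewrite invr_ge0 ltW | exact: itv0 | apply: itv0; rewrite lee_fin | exact: SB].
  apply: le_trans h1 _.
  by rewrite poweR_EFin lee_fin lerDl.
move=> hB hL.
apply/cvge0P; first by move=> n; exact: poweR_ge0.
move=> e e0.
set η := e `^ p.
have η0 : 0 < η by rewrite powR_gt0.
set η' := η / (2 * (L + 1)).
have η'0 : 0 < η' by rewrite divr_gt0 // mulr_gt0 //; lra.
have B0 : forall n, (0 <= B1 (powabs p (u_ n)) (powabs p (v_ n)))%E.
  move=> n; apply: integral_ge0 => x _; apply: integral_ge0 => y _.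
  by rewrite lee_fin !mulr_ge0 ?powR_ge0 // (ell_ge0 (x.1 - y.1, x.2 - y.2)).
have q1 : 0 < δ * a * η / 2 by rewrite divr_gt0 // !mulr_gt0.
have q2 : 0 < η' `^ p^-1 by rewrite powR_gt0.
have [N1 hN1] := (cvge0P B0).1 hB _ q1.
have [N2 hN2] := (cvge0P Lp0).1 hL _ q2.
exists (maxn m (maxn N1 N2)) => n hn.
have hm : (m <= n)%N by exact: leq_trans (leq_maxl _ _) hn.
have hn1 : (N1 <= n)%N by exact: leq_trans (leq_maxl _ _) (leq_trans (leq_maxr _ _) hn).
have hn2 : (N2 <= n)%N by exact: leq_trans (leq_maxr _ _) (leq_trans (leq_maxr _ _) hn).
have hNn : fine (N n) <= η'.
  rewrite -lee_fin fineK // NL.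
  have q3 : (0 <= (η' `^ p^-1)%:E)%E by rewrite lee_fin powR_ge0.
  have := @gt0_ler_poweR R p (ltW p0) _ _ (itv0 _ (Lp0 n)) (itv0 _ q3) (hN2 n hn2).
  move=> h; apply: le_trans h _.
  by rewrite poweR_EFin -powRrM mulVf ?gt_eqF // powRr1 // ltW.
have hS : (S n <= η%:E)%E.
  have -> : η = (δ * a)^-1 * (δ * a * η) by rewrite mulKf // gt_eqF // mulr_gt0.
  rewrite EFinM lee_pdivlMl ?mulr_gt0 //.
  apply: le_trans (key n hm) _.
  apply: (@le_trans _ _ ((δ * a * η / 2)%:E + (δ * L * a * η')%:E)%E).
    apply: leeD; first exact: hN1.
    by rewrite lee_fin; apply: ler_wpM2l hNn; rewrite !mulr_ge0 // ltW.
  rewrite -EFinD lee_fin.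
  have e1 : (L + 1) * η' = η / 2 by rewrite /η'; field; lra.
  have e2 : L * η' <= η / 2 by nra.
  have e3 : 0 <= δ * a * (η / 2 - L * η') by rewrite mulr_ge0 ?mulr_ge0 ?ltW //; lra.
  nra.
have h1 : (S n `^ p^-1 <= η%:E `^ p^-1)%E.
  by apply: gt0_ler_poweR; [rewrite invr_ge0 ltW | exact: itv0 | apply: itv0; rewrite lee_fin ltW | exact: hS].
apply: le_trans h1 _.
by rewrite poweR_EFin /η -powRrM mulfV ?gt_eqF // powRr1 // ltW.
Qed.
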